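(* Let $A$ be a C*-algebra and $V$ an Abelian annihilator of $A$. Then (a) $\mathcal{P}_V$ is a Boolean algebra; (b) each Abelian annihilator of $A$ is modular.
   Context: For a C*-algebra $B$ and $S\subseteq B$, $\mathrm{Ann}_B(S)=\{a\in B: as+sa=0\ \forall s\in S\}$, and $\mathcal{P}_B=\{V\subseteq B: V=\mathrm{Ann}_B(\mathrm{Ann}_B(S)) \text{ for some } S\subseteq B_+\}$ (ordered by inclusion) is the set of annihilators of $B$. An annihilator $V\in\mathcal{P}_A$ is Abelian if it is a commutative C*-subalgebra of $A$. For $V\in\mathcal{P}_A$ (a C*-subalgebra), $\mathcal{P}_V$ is the set of annihilators computed inside $V$; $V$ is modular if $\mathcal{P}_V$ is a modular lattice. *)

(* Defs.v *)
From HB Require Import structures.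
From mathcomp Require Import all_boot all_order all_algebra.
From mathcomp Require Import complex.
From mathcomp Require Import boolp classical_sets reals.
Set Implicit Arguments. Unset Strict Implicit. Unset Printing Implicit Defensive.
Import Order.TTheory GRing.Theory Num.Theory.
Local Open Scope ring_scope.
Local Open Scope classical_set_scope.

Section CStar.
Variables (R : realType) (A : lmodType R[i]).
Variables (mul : A -> A -> A) (star : A -> A) (norm : A -> R).

Definition cstar_axioms : Prop :=
  [/\ (forall x y z, mul (x + y) z = mul x z + mul y z),
      (forall x y z, mul x (y + z) = mul x y + mul x z),
      (forall (a : R[i]) x y, mul (a *: x) y = a *: mul x y),
      (forall (a : R[i]) x y, mul x (a *: y) = a *: mul x y) &
      (forall x y z, mul x (mul y z) = mul (mul x y) z)] /\
  [/\ (forall x y, star (x + y) = star x + star y),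
      (forall (a : R[i]) x, star (a *: x) = (a^*)%C *: star x),
      (forall x, star (star x) = x) &
      (forall x y, star (mul x y) = mul (star y) (star x))] /\
  [/\ (forall x, norm x = 0 -> x = 0),
      (forall x y, norm (x + y) <= norm x + norm y),
      (forall (a : R[i]) x, norm (a *: x) = Normc.normc a * norm x),
      (forall x y, norm (mul x y) <= norm x * norm y) &
      (forall x, norm (mul (star x) x) = norm x ^+ 2)] /\
  (forall u : nat -> A,
     (forall e : R, 0 < e -> exists N, forall m n, (N <= m)%N -> (N <= n)%N ->
        norm (u m - u n) < e) ->
     exists l, forall e : R, 0 < e -> exists N, forall n, (N <= n)%N ->
        norm (u n - l) < e).

Definition cstar_subalgebra (B : set A) : Prop :=
  B 0 /\
  [/\ (forall x y, B x -> B y -> B (x + y)),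
      (forall (a : R[i]) x, B x -> B (a *: x)),
      (forall x y, B x -> B y -> B (mul x y)),
      (forall x, B x -> B (star x)) &
      (forall (u : nat -> A) l, (forall n, B (u n)) ->
         (forall e : R, 0 < e -> exists N, forall n, (N <= n)%N -> norm (u n - l) < e) ->
         B l)].

(* Positive elements of the C*-algebra B (computed inside B, via the
   unitization B~ = B + C1): b is self-adjoint and its spectrum lies in
   [0, +oo), i.e. for every complex lambda not in [0,+oo), b - lambda 1 is
   invertible in B~; its inverse necessarily has the form c - lambda^-1 1
   with c in B, which gives the two equations below. *)
Definition positive_part (B : set A) : set A :=
  [set b | B b /\ star b = b /\
     forall lambda : R[i], ~~ (0 <= lambda) ->
       exists c, B c /\
         mul b c - lambda *: c - lambda^-1 *: b = 0 /\
         mul c b - lambda *: c - lambda^-1 *: b = 0].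

Definition Ann (B S : set A) : set A :=
  [set a | B a /\ forall s, S s -> mul a s + mul s a = 0].

Definition annihilators (B : set A) : set (set A) :=
  [set V | exists S, S `<=` positive_part B /\ V = Ann B (Ann B S)].

Definition abelian (V : set A) : Prop :=
  cstar_subalgebra V /\ forall x y, V x -> V y -> mul x y = mul y x.

End CStar.

Section SetLattice.
Variable T : Type.
Implicit Types (F : set (set T)) (X Y Z : set T).

Definition is_join F X Y J : Prop :=
  F J /\ X `<=` J /\ Y `<=` J /\
  forall K, F K -> X `<=` K -> Y `<=` K -> J `<=` K.

Definition is_meet F X Y M : Prop :=
  F M /\ M `<=` X /\ M `<=` Y /\
  forall K, F K -> K `<=` X -> K `<=` Y -> K `<=` M.

Definition is_lattice F : Prop :=
  forall X Y, F X -> F Y ->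
    (exists J, is_join F X Y J) /\ (exists M, is_meet F X Y M).

(* x <= z -> x \/ (y /\ z) = (x \/ y) /\ z *)
Definition modular_lattice F : Prop :=
  is_lattice F /\
  forall X Y Z, F X -> F Y -> F Z -> X `<=` Z ->
    forall m j1 j2 m2, is_meet F Y Z m -> is_join F X m j1 ->
      is_join F X Y j2 -> is_meet F j2 Z m2 -> j1 = m2.

(* x /\ (y \/ z) = (x /\ y) \/ (x /\ z) *)
Definition distributive_lattice F : Prop :=
  is_lattice F /\
  forall X Y Z, F X -> F Y -> F Z ->
    forall j m a b d, is_join F Y Z j -> is_meet F X j m ->
      is_meet F X Y a -> is_meet F X Z b -> is_join F a b d -> m = d.

Definition boolean_algebra F : Prop :=
  distributive_lattice F /\
  exists bot top, F bot /\ F top /\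
    (forall X, F X -> bot `<=` X /\ X `<=` top) /\
    (forall X, F X -> exists Y, F Y /\ is_meet F X Y bot /\ is_join F X Y top).

End SetLattice.

(* Main.v *)
Require Import Defs.
From HB Require Import structures.
From mathcomp Require Import all_boot all_order all_algebra.
From mathcomp Require Import complex.
From mathcomp Require Import boolp classical_sets reals.
From mathcomp Require Import ring lra.
Set Implicit Arguments. Unset Strict Implicit. Unset Printing Implicit Defensive.
Import Order.TTheory GRing.Theory Num.Theory.
Local Open Scope ring_scope.
Local Open Scope classical_set_scope.

Section S.
Variables (R : realType) (A : lmodType R[i]).
Variables (mul : A -> A -> A) (star : A -> A) (norm : A -> R).
Hypothesis hA : cstar_axioms mul star norm.
Variable V : set A.
Hypothesis hV : abelian mul star norm V.

Lemma amulDl x y z : mul (x + y) z = mul x z + mul y z.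
Proof. by case: hA => [[h _ _ _ _] _]; apply: h. Qed.
Lemma amulDr x y z : mul x (y + z) = mul x y + mul x z.
Proof. by case: hA => [[_ h _ _ _] _]; apply: h. Qed.
Lemma amulZl a x y : mul (a *: x) y = a *: mul x y.
Proof. by case: hA => [[_ _ h _ _] _]; apply: h. Qed.
Lemma amulZr a x y : mul x (a *: y) = a *: mul x y.
Proof. by case: hA => [[_ _ _ h _] _]; apply: h. Qed.
Lemma amulA x y z : mul x (mul y z) = mul (mul x y) z.
Proof. by case: hA => [[_ _ _ _ h] _]; apply: h. Qed.
Lemma starD x y : star (x + y) = star x + star y.
Proof. by case: hA => [_ [[h _ _ _] _]]; apply: h. Qed.
Lemma starZ a x : star (a *: x) = (a^*)%C *: star x.
Proof. by case: hA => [_ [[_ h _ _] _]]; apply: h. Qed.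
Lemma starK x : star (star x) = x.
Proof. by case: hA => [_ [[_ _ h _] _]]; apply: h. Qed.
Lemma starM x y : star (mul x y) = mul (star y) (star x).
Proof. by case: hA => [_ [[_ _ _ h] _]]; apply: h. Qed.
Lemma normE0 x : norm x = 0 -> x = 0.
Proof. by case: hA => [_ [_ [[h _ _ _ _] _]]]; apply: h. Qed.
Lemma normD x y : norm (x + y) <= norm x + norm y.
Proof. by case: hA => [_ [_ [[_ h _ _ _] _]]]; apply: h. Qed.
Lemma normZ a x : norm (a *: x) = Normc.normc a * norm x.
Proof. by case: hA => [_ [_ [[_ _ h _ _] _]]]; apply: h. Qed.
Lemma normM x y : norm (mul x y) <= norm x * norm y.
Proof. by case: hA => [_ [_ [[_ _ _ h _] _]]]; apply: h. Qed.
Lemma normC x : norm (mul (star x) x) = norm x ^+ 2.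
Proof. by case: hA => [_ [_ [[_ _ _ _ h] _]]]; apply: h. Qed.
Lemma complete (u : nat -> A) :
     (forall e : R, 0 < e -> exists N, forall m n, (N <= m)%N -> (N <= n)%N ->
        norm (u m - u n) < e) ->
     exists l, forall e : R, 0 < e -> exists N, forall n, (N <= n)%N ->
        norm (u n - l) < e.
Proof. by case: hA => [_ [_ [_ h]]]; apply: h. Qed.

Lemma V0 : V 0. Proof. by case: hV => [[h _] _]. Qed.
Lemma VD x y : V x -> V y -> V (x + y). Proof. by case: hV => [[_ [h _ _ _ _]] _]; apply: h. Qed.
Lemma VZ a x : V x -> V (a *: x). Proof. by case: hV => [[_ [_ h _ _ _]] _]; apply: h. Qed.
Lemma VM x y : V x -> V y -> V (mul x y). Proof. by case: hV => [[_ [_ _ h _ _]] _]; apply: h. Qed.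
Lemma VS x : V x -> V (star x). Proof. by case: hV => [[_ [_ _ _ h _]] _]; apply: h. Qed.
Lemma Vlim (u : nat -> A) l : (forall n, V (u n)) ->
         (forall e : R, 0 < e -> exists N, forall n, (N <= n)%N -> norm (u n - l) < e) ->
         V l.
Proof. by case: hV => [[_ [_ _ _ _ h]] _]; apply: h. Qed.
Lemma amulC x y : V x -> V y -> mul x y = mul y x.
Proof. by case: hV => [_ h]; apply: h. Qed.
Lemma VN x : V x -> V (- x). Proof. by move=> h; rewrite -scaleN1r; apply: VZ. Qed.

Lemma amul0l x : mul 0 x = 0.
Proof. by have := amulZl 0 0 x; rewrite !scale0r. Qed.
Lemma amul0r x : mul x 0 = 0.
Proof. by have := amulZr 0 x 0; rewrite !scale0r. Qed.

Record U := MkU { ua : A; uP : V ua; us : R[i] }.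
HB.instance Definition _ := gen_eqMixin U.
HB.instance Definition _ := gen_choiceMixin U.

Lemma uext (a b : U) : ua a = ua b -> us a = us b -> a = b.
Proof.
case: a => x hx al; case: b => y hy be /= exy eab; subst.
by rewrite (Prop_irrelevance hx hy).
Qed.

Definition uzero := MkU V0 0.
Definition uadd (a b : U) := MkU (VD (uP a) (uP b)) (us a + us b).
Definition uopp (a : U) := MkU (VN (uP a)) (- us a).
Lemma VMU (a b : U) : V (mul (ua a) (ua b) + us a *: ua b + us b *: ua a).
Proof. by apply: VD; [apply: VD|]; [apply: VM; apply: uP| |]; apply: VZ; apply: uP. Qed.
Definition umul (a b : U) := MkU (VMU a b) (us a * us b).
Definition uone := MkU V0 1.

Lemma uaddA : associative uadd.
Proof. by move=> a b c; apply: uext => /=; rewrite addrA. Qed.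
Lemma uaddC : commutative uadd.
Proof. by move=> a b; apply: uext => /=; rewrite addrC. Qed.
Lemma uadd0 : left_id uzero uadd.
Proof. by move=> a; apply: uext => /=; rewrite add0r. Qed.
Lemma uaddN : left_inverse uzero uopp uadd.
Proof. by move=> a; apply: uext => /=; rewrite addNr. Qed.
HB.instance Definition _ := GRing.isZmodule.Build U uaddA uaddC uadd0 uaddN.

Lemma umulA : associative umul.
Proof.
move=> [x hx a] [y hy b] [z hz c]; apply: uext => /=; last by rewrite mulrA.
rewrite !amulDl !amulDr !amulZl !amulZr !scalerDr !scalerA amulA.
rewrite !addrA [c * a]mulrC [c * b]mulrC.
by rewrite (ACl (1*4*2*5*3*6*7)).
Qed.

Lemma umulC : commutative umul.
Proof.
move=> [x hx a] [y hy b]; apply: uext => /=; last by rewrite mulrC.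
by rewrite (amulC hx hy) -!addrA [_ + b *: x]addrC.
Qed.
Lemma umul1 : left_id uone umul.
Proof.
move=> [x hx a]; apply: uext => /=; last by rewrite mul1r.
by rewrite amul0l scale1r scaler0 add0r addr0.
Qed.
Lemma umulDl : left_distributive umul uadd.
Proof.
move=> [x hx a] [y hy b] [z hz c]; apply: uext => /=; last by rewrite mulrDl.
rewrite amulDl scalerDl scalerDr !addrA.
by rewrite (ACl (1*3*5*2*4*6)).
Qed.
Lemma uone_neq0 : uone != uzero.
Proof. by apply/eqP => /(congr1 us) /= /eqP; rewrite oner_eq0. Qed.
HB.instance Definition _ := GRing.Zmodule_isComNzRing.Build U umulA umulC umul1 umulDl uone_neq0.


Definition emb (c : R[i]) : U := MkU V0 c.
Definition vec x (hx : V x) : U := MkU hx 0.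

Lemma embD a b : emb (a + b) = emb a + emb b.
Proof. by apply: uext => //=; rewrite addr0. Qed.
Lemma embN a : emb (- a) = - emb a.
Proof. by apply: uext => //=; rewrite oppr0. Qed.
Lemma embB a b : emb (a - b) = emb a - emb b.
Proof. by rewrite embD embN. Qed.
Lemma embM a b : emb (a * b) = emb a * emb b.
Proof. by apply: uext => /=; rewrite ?amul0l ?amul0r ?scaler0 ?scale0r ?add0r ?addr0 ?mulr0 ?mul0r ?oppr0. Qed.
Lemma emb1 : emb 1 = 1.
Proof. by apply: uext. Qed.
Lemma emb0 : emb 0 = 0.
Proof. by apply: uext. Qed.
Lemma embvec c x (hx : V x) : emb c * vec hx = vec (VZ c hx).
Proof. by apply: uext => /=; rewrite ?amul0l ?amul0r ?scaler0 ?scale0r ?add0r ?addr0 ?mulr0 ?mul0r ?oppr0. Qed.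
Lemma vecvec x y (hx : V x) (hy : V y) : vec hx * vec hy = vec (VM hx hy).
Proof. by apply: uext => /=; rewrite ?amul0l ?amul0r ?scaler0 ?scale0r ?add0r ?addr0 ?mulr0 ?mul0r ?oppr0. Qed.
Lemma vecD x y (hx : V x) (hy : V y) : vec hx + vec hy = vec (VD hx hy).
Proof. by apply: uext => //=; rewrite addr0. Qed.
Lemma vecN x (hx : V x) : - vec hx = vec (VN hx).
Proof. by apply: uext => //=; rewrite oppr0. Qed.
Lemma vec0 (h : V 0) : vec h = 0.
Proof. by apply: uext. Qed.
Lemma vec_eq x y (hx : V x) (hy : V y) : x = y -> vec hx = vec hy.
Proof. by move=> e; apply: uext. Qed.
Lemma udec (p : U) : p = vec (uP p) + emb (us p).
Proof. by apply: uext => //=; rewrite ?addr0 ?add0r. Qed.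
Lemma ua_vec x (hx : V x) : ua (vec hx) = x. Proof. by []. Qed.
Lemma us_vec x (hx : V x) : us (vec hx) = 0. Proof. by []. Qed.
Lemma us_emb c : us (emb c) = c. Proof. by []. Qed.
Lemma ua_emb c : ua (emb c) = 0. Proof. by []. Qed.
Lemma usD p q : us (p + q) = us p + us q. Proof. by []. Qed.
Lemma usM p q : us (p * q) = us p * us q. Proof. by []. Qed.
Lemma usN p : us (- p) = - us p. Proof. by []. Qed.
Lemma us1 : us 1 = 1. Proof. by []. Qed.
Lemma uaD p q : ua (p + q) = ua p + ua q. Proof. by []. Qed.
Lemma uaN p : ua (- p) = - ua p. Proof. by []. Qed.
Lemma uaM p q : ua (p * q) = mul (ua p) (ua q) + us p *: ua q + us q *: ua p.
Proof. by []. Qed.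
Lemma ua1 : ua 1 = 0. Proof. by []. Qed.

Lemma star0 : star 0 = 0.
Proof. by have := starZ 0 0; rewrite conjc0 !scale0r. Qed.
Lemma starN x : star (- x) = - star x.
Proof. by rewrite -scaleN1r starZ rmorphN rmorph1 scaleN1r. Qed.

Definition ustar (p : U) : U := MkU (VS (uP p)) ((us p)^*)%C.
Lemma ustarD p q : ustar (p + q) = ustar p + ustar q.
Proof. by apply: uext => /=; rewrite ?starD ?rmorphD. Qed.
Lemma ustarM p q : ustar (p * q) = ustar p * ustar q.
Proof.
apply: uext => /=; last by rewrite rmorphM mulrC.
rewrite !starD !starZ starM (amulC (VS (uP q)) (VS (uP p))).
by rewrite addrAC.
Qed.
Lemma ustarN p : ustar (- p) = - ustar p.
Proof. by apply: uext => /=; rewrite ?starN ?rmorphN. Qed.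
Lemma ustar1 : ustar 1 = 1.
Proof. by apply: uext; [exact: star0 | exact: conjc1]. Qed.
Lemma ustar_emb c : ustar (emb c) = emb (c^*)%C.
Proof. by apply: uext => /=; rewrite ?star0. Qed.
Lemma ustar_vec x (hx : V x) : ustar (vec hx) = vec (VS hx).
Proof. by apply: uext; [by [] | exact: conjc0]. Qed.

Lemma normc_m1 : Normc.normc (-1 : R[i]) = 1.
Proof. by rewrite normcN Normc.normc1. Qed.
Lemma norm0 : norm 0 = 0.
Proof. by have := normZ 0 0; rewrite scale0r Normc.normc0 mul0r. Qed.
Lemma normN x : norm (- x) = norm x.
Proof. by rewrite -scaleN1r normZ normc_m1 mul1r. Qed.
Lemma norm_ge0 x : 0 <= norm x.
Proof.
have := normD x (- x); rewrite subrr norm0 normN => h.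
by rewrite -(pmulr_rge0 _ (ltr0Sn R 1)) mulr2n mulrDl mul1r.
Qed.
Lemma normB x y : norm (x - y) = norm (y - x).
Proof. by rewrite -normN opprB. Qed.
Lemma normS x : norm (star x) = norm x.
Proof.
suff h : forall y, norm y <= norm (star y).
  by apply/eqP; rewrite eq_le h -{2}(starK x) h.
move=> y; have := normM (star y) y; rewrite normC expr2.
have [y0|yp] := eqVneq (norm y) 0; first by rewrite y0 norm_ge0.
have yp' : 0 < norm y by rewrite lt_def yp norm_ge0.
by rewrite ler_pM2r.
Qed.
Lemma normC0 x : mul (star x) x = 0 -> x = 0.
Proof.
move=> h; apply: normE0; have := normC x; rewrite h norm0 => /eqP.
by rewrite eq_sym expf_eq0 /= => /eqP.
Qed.
Lemma amulBr x y z : mul x (y - z) = mul x y - mul x z.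
Proof. by rewrite amulDr -scaleN1r amulZr scaleN1r. Qed.
Lemma amulBl x y z : mul (x - y) z = mul x z - mul y z.
Proof. by rewrite amulDl -scaleN1r amulZl scaleN1r. Qed.

Definition conv (u : nat -> A) l := forall e : R, 0 < e -> exists N, forall n, (N <= n)%N -> norm (u n - l) < e.

Lemma conv_unique u l1 l2 : conv u l1 -> conv u l2 -> l1 = l2.
Proof.
move=> c1 c2; apply/eqP; rewrite -subr_eq0; apply/eqP/normE0.
apply/eqP; rewrite eq_le norm_ge0 andbT; apply/ler_addgt0Pr => e e0.
rewrite add0r; have e2 : 0 < e / 2 by rewrite divr_gt0.
have [N1 h1] := c1 _ e2; have [N2 h2] := c2 _ e2.
have := h1 (maxn N1 N2) (leq_maxl _ _); have := h2 (maxn N1 N2) (leq_maxr _ _).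
set v := u _ => a b.
have : norm (l1 - l2) <= norm (l1 - v) + norm (v - l2).
  have -> : l1 - l2 = (l1 - v) + (v - l2) by rewrite addrA subrK.
  exact: normD.
move=> h; apply: (le_trans h); rewrite [norm (l1 - v)]normB [e]splitr; apply: ltW.
by apply: ltrD.
Qed.

Lemma conv_mul y u l : conv u l -> conv (fun n => mul y (u n)) (mul y l).
Proof.
move=> c e e0; have e1 : 0 < e / (norm y + 1).
  by rewrite divr_gt0 // ltr_wpDl // norm_ge0.
have [N h] := c _ e1; exists N => n Nn; rewrite -amulBr.
apply: (le_lt_trans (normM _ _)).
have := h n Nn; rewrite ltr_pdivlMr ?ltr_wpDl ?norm_ge0 // => h2.
apply: le_lt_trans h2; rewrite mulrC ler_wpM2l ?norm_ge0 //.
by rewrite lerDl.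
Qed.

Lemma conv_shift u l : conv u l -> conv (fun n => u n.+1) l.
Proof. by move=> c e e0; have [N h] := c _ e0; exists N => n Nn; apply: h; apply: leqW. Qed.

Lemma conv_subc u l c : conv u l -> conv (fun n => u n - c) (l - c).
Proof. by move=> h e e0; have [N h2] := h _ e0; exists N => n Nn; rewrite opprB addrA subrK; apply: h2. Qed.

Lemma exists_pow_small (e : R) : 0 < e -> exists N : nat, (2^-1) ^+ N < e.
Proof.
move=> e0; have ei : 0 <= e^-1 by rewrite invr_ge0 ltW.
have := @archi_boundP R (e^-1) ei.
set N := Num.Def.archi_bound _ => h; exists N.
rewrite exprVn -[e]invrK ltf_pV2 ?posrE ?exprn_gt0 ?invr_gt0 //.
apply: (lt_le_trans h); rewrite -natrX ler_nat.
by elim: (N) => // n ih; rewrite expnS mul2n -addnn -addn1 leq_add // expn_gt0.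
Qed.

Fixpoint Sq (y : A) n := match n with 0%N => 0 | n.+1 => y + mul y (Sq y n) end.

Lemma half_ge0 : 0 <= (2^-1 : R). Proof. by rewrite invr_ge0 ler0n. Qed.
Lemma half_le1 : (2^-1 : R) <= 1. Proof. by rewrite invf_le1 ?ler1n ?ltr0n. Qed.

Lemma QI y : V y -> norm y <= 2^-1 -> exists q, V q /\ mul y q = q - y.
Proof.
move=> Vy ny.
have VSq : forall n, V (Sq y n).
  by elim=> [|n ih] /=; [exact: V0 | apply: VD => //; apply: VM].
have dif : forall n, norm (Sq y n.+1 - Sq y n) <= (2^-1) ^+ n.+1.
  elim=> [|n ih]; first by rewrite /= amul0r addr0 subr0 expr1.
  have -> : Sq y n.+2 - Sq y n.+1 = mul y (Sq y n.+1 - Sq y n).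
    by rewrite amulBr /= opprD addrACA subrr add0r.
  apply: (le_trans (normM _ _)); rewrite exprS.
  by apply: ler_pM => //; apply: norm_ge0.
have tail : forall n j, norm (Sq y (n + j) - Sq y n) <= (2^-1) ^+ n - (2^-1) ^+ (n + j).
  move=> n; elim=> [|j ih]; first by rewrite addn0 !subrr norm0.
  have -> : Sq y (n + j.+1) - Sq y n = (Sq y (n + j).+1 - Sq y (n + j)) + (Sq y (n + j) - Sq y n).
    by rewrite addnS addrA subrK.
  apply: (le_trans (normD _ _)); have := dif (n + j); rewrite addnS exprS => h1.
  have : (2^-1 : R) * (2^-1) ^+ (n + j) + ((2^-1) ^+ n - (2^-1) ^+ (n + j)) =
      (2^-1) ^+ n - 2^-1 * (2^-1) ^+ (n + j) by field.
  move=> <-; exact: lerD.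
have cau : forall e : R, 0 < e -> exists N, forall m n, (N <= m)%N -> (N <= n)%N ->
        norm (Sq y m - Sq y n) < e.
  move=> e e0; have [N hN] := exists_pow_small e0; exists N.
  have key : forall m n, (N <= n)%N -> (n <= m)%N -> norm (Sq y m - Sq y n) < e.
    move=> m n Nn nm; rewrite -(subnKC nm).
    apply: (le_lt_trans (tail _ _)); apply: le_lt_trans hN.
    rewrite lerBlDr; apply: (le_trans (ler_wiXn2l half_ge0 half_le1 Nn)).
    by rewrite lerDl exprn_ge0 // half_ge0.
  move=> m n Nm Nn; case: (leqP n m) => [nm|mn]; first exact: key.
  by rewrite normB; apply: key => //; apply: ltnW.
have [l hl] := complete cau.
have Vl : V l by apply: Vlim VSq hl.
exists l; split => //.
apply: (conv_unique (conv_mul y hl)).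
have -> : (fun n => mul y (Sq y n)) = (fun n => Sq y n.+1 - y).
  by apply: funext => n /=; rewrite addrC addKr.
exact: conv_subc (conv_shift hl).
Qed.

Definition isinv (p : U) := exists q, p * q = 1.
Lemma isinvM p q : isinv p -> isinv q -> isinv (p * q).
Proof. by move=> [p' hp] [q' hq]; exists (p' * q'); rewrite mulrACA hp hq mulr1. Qed.
Lemma isinv_emb c : c != 0 -> isinv (emb c).
Proof. by move=> c0; exists (emb c^-1); rewrite -embM divff // emb1. Qed.

Lemma QI_inv y (Vy : V y) : norm y <= 2^-1 -> isinv (1 - vec Vy).
Proof.
move=> ny; have [q [Vq e]] := QI Vy ny.
exists (1 + vec Vq).
have e2 : vec Vy * vec Vq = vec Vq - vec Vy.
  by rewrite vecvec vecN vecD; apply: vec_eq.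
have -> : (1 - vec Vy) * (1 + vec Vq) = 1 + vec Vq - vec Vy - vec Vy * vec Vq by ring.
by rewrite e2; ring.
Qed.

Lemma normc_ge0 (c : R[i]) : 0 <= Normc.normc c.
Proof. by case: c => x y /=; apply: sqrtr_ge0. Qed.
Lemma normc_gt0 (c : R[i]) : c != 0 -> 0 < Normc.normc c.
Proof.
move=> c0; rewrite lt_def normc_ge0 andbT; apply/eqP => /Normc.eq0_normc.
by apply/eqP.
Qed.
Lemma normc_conj (c : R[i]) : Normc.normc (c^*)%C = Normc.normc c.
Proof. by case: c => x y /=; rewrite sqrrN. Qed.

Lemma resI h (Vh : V h) mu : mu != 0 -> 2 * norm h <= Normc.normc mu ->
  isinv (vec Vh - emb mu).
Proof.
move=> mu0 hmu.
have Vy := VZ mu^-1 Vh.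
have -> : vec Vh - emb mu = emb (- mu) * (1 - vec Vy).
  rewrite mulrBr mulr1 embvec.
  have -> : vec (VZ (- mu) Vy) = - vec Vh.
    by rewrite vecN; apply: vec_eq; rewrite scalerA mulNr divff // scaleN1r.
  by rewrite embN opprK addrC.
apply: isinvM; first by apply: isinv_emb; rewrite oppr_eq0.
apply: QI_inv; rewrite normZ Normc.normcV.
have mp := normc_gt0 mu0.
have h2 : norm h <= Normc.normc mu / 2 by rewrite ler_pdivlMr ?ltr0n // mulrC.
apply: (le_trans (ler_wpM2l _ h2)); first by rewrite invr_ge0 ltW.
by rewrite mulrA mulVf ?gt_eqF // mul1r.
Qed.

Lemma ua_ustar p : ua (ustar p) = star (ua p). Proof. by []. Qed.
Lemma us_ustar p : us (ustar p) = ((us p)^*)%C. Proof. by []. Qed.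

Lemma inv_us h (Vh : V h) mu (R0 : U) : mu != 0 ->
  (vec Vh - emb mu) * R0 = 1 -> us R0 = - mu^-1.
Proof.
move=> mu0 H; have := congr1 us H.
rewrite usM usD usN us_vec us_emb us1 add0r => e.
have := congr1 (fun t => (- mu)^-1 * t) e; rewrite /= mulrA mulVf ?oppr_eq0 //.
by rewrite mul1r mulr1 invrN.
Qed.

Lemma resB h (Vh : V h) (sh : star h = h) a b (R0 : U) :
  b != 0 -> (vec Vh - emb (a +i* b)%C) * R0 = 1 ->
  norm (ua R0) * `|b| <= 1.
Proof.
move=> b0 H; set mu := (a +i* b)%C in H.
have mu0 : mu != 0.
  by apply: contra b0; rewrite eq_complex => /andP [_].
have usR := inv_us mu0 H.
have Hs : (vec Vh - emb (mu^*)%C) * ustar R0 = 1.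
  have := congr1 ustar H; rewrite ustarM ustarD ustarN ustar_vec ustar_emb ustar1.
  by rewrite (vec_eq (VS Vh) Vh sh).
set W := (vec Vh - emb (mu^*)%C) * R0.
have hW : ustar W * W = 1.
  have -> : ustar W = (vec Vh - emb mu) * ustar R0.
    rewrite /W ustarM ustarD ustarN ustar_vec ustar_emb conjcK.
    by rewrite (vec_eq (VS Vh) Vh sh).
  have -> : (vec Vh - emb mu) * ustar R0 * W =
     ((vec Vh - emb mu) * R0) * ((vec Vh - emb (mu^*)%C) * ustar R0) by rewrite /W; ring.
  by rewrite H Hs mulr1.
set d := mu - (mu^*)%C.
set th := 1 + d * - mu^-1.
have Vz := VZ d (uP R0).
set z := d *: ua R0 in Vz.
have eW : W = vec Vz + emb th.
  have -> : W = (vec Vh - emb mu) * R0 + (emb mu - emb (mu^*)%C) * R0 by rewrite /W; ring.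
  rewrite H -embB -/d (udec R0) usR mulrDr embvec -embM.
  rewrite /th embD emb1; rewrite (vec_eq _ Vz) //; ring.
rewrite eW in hW.
have hua := congr1 ua hW; have hus := congr1 us hW.
rewrite uaM ua1 !ua_ustar uaD ua_vec ua_emb addr0 !us_ustar usD us_vec us_emb add0r in hua.
rewrite usM us1 !us_ustar usD us_vec us_emb add0r in hus.
have nth : Normc.normc th = 1.
  have := congr1 (@Normc.normc R) hus; rewrite Normc.normcM normc_conj Normc.normc1.
  move=> /eqP; rewrite -expr2 sqrf_eq1 => /orP [/eqP //|/eqP e].
  by have := normc_ge0 th; rewrite e ler0N1.
have nzd : norm z = Normc.normc d * norm (ua R0) by rewrite /z normZ.
clearbody z.
have nz : norm z <= 2.
  have e1 : mul (star z) z = - ((th^*)%C *: z + th *: star z).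
    by apply/eqP; rewrite -addr_eq0 addrA hua.
  have := normC z; rewrite e1 normN => e2.
  have : norm z ^+ 2 <= 2 * norm z.
    rewrite -e2; apply: (le_trans (normD _ _)); rewrite !normZ normc_conj nth normS.
    by rewrite !mul1r mulr2n mulrDl mul1r.
  rewrite expr2; have [z0|zp] := eqVneq (norm z) 0; first by rewrite z0.
  by rewrite ler_pM2r // lt_def zp norm_ge0.
have nd : Normc.normc d = 2 * `|b|.
  have -> : d = (0 +i* (b *+ 2))%C.
    by apply/eqP; rewrite eq_complex /= subrr eqxx /= opprK mulr2n.
  rewrite /= expr0n /= add0r sqrtr_sqr normrMn mulr2n mulrDl mul1r.
  by [].
move: nz; rewrite nzd nd -mulrA -{2}[2](mulr1 (2 : R)) ler_pM2l ?ltr0n //.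
by rewrite mulrC.
Qed.

Lemma resStep h (Vh : V h) mu0 mu (R0 : U) K :
  mu0 != 0 -> mu != 0 -> (vec Vh - emb mu0) * R0 = 1 -> norm (ua R0) <= K ->
  Normc.normc (mu - mu0) * Normc.normc mu0 * K <= Normc.normc mu / 2 ->
  isinv (vec Vh - emb mu).
Proof.
move=> mu00 mun0 H nR hK.
set dl := mu - mu0; set ka := 1 + dl * mu0^-1.
have kaE : ka = mu / mu0 by rewrite /ka /dl; field.
have ka0 : ka != 0 by rewrite kaE mulf_neq0 ?invr_eq0.
have usR := inv_us mu00 H.
have e1 : vec Vh - emb mu = (vec Vh - emb mu0) * (1 - emb dl * R0).
  have -> : (vec Vh - emb mu0) * (1 - emb dl * R0) =
      vec Vh - emb mu0 - emb dl * ((vec Vh - emb mu0) * R0) by ring.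
  by rewrite H mulr1 /dl embB; ring.
have Vy := VZ (dl / ka) (uP R0).
have e2 : 1 - emb dl * R0 = emb ka * (1 - vec Vy).
  rewrite {1}(udec R0) usR mulrBr mulr1 embvec mulrDr embvec.
  rewrite (vec_eq (VZ ka Vy) (VZ dl (uP R0))); last first.
    by rewrite scalerA mulrC divfK.
  by rewrite /ka [emb (1 + _)]embD emb1 embM embN; ring.
rewrite e1 e2; apply: isinvM; first by exists R0.
apply: isinvM; first exact: isinv_emb.
apply: QI_inv; rewrite normZ.
have -> : dl / ka = dl * mu0 / mu by rewrite kaE invf_div mulrA.
rewrite !Normc.normcM Normc.normcV.
have mp := normc_gt0 mun0.
rewrite mulrAC ler_pdivrMr // mulrC.
rewrite [2^-1 * _]mulrC; apply: le_trans hK.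
rewrite [X in X <= _]mulrC ler_wpM2l //.
by rewrite mulr_ge0 ?normc_ge0.
Qed.

Lemma normc_Im (s t : R) : `|t| <= Normc.normc (s +i* t)%C.
Proof. by rewrite /= -sqrtr_sqr ler_wsqrtr // lerDr sqr_ge0. Qed.

Lemma normc_cmp (s t1 t0 : R) : 0 <= t1 -> t1 <= t0 ->
  t1 * Normc.normc (s +i* t0)%C <= t0 * Normc.normc (s +i* t1)%C.
Proof.
move=> t1p t10; have t0p : 0 <= t0 by apply: le_trans t10.
rewrite /= -{1}(ger0_norm t1p) -{2}(ger0_norm t0p) -!sqrtr_sqr.
rewrite -!sqrtrM ?sqr_ge0 //; apply: ler_wsqrtr.
have : t1 ^+ 2 <= t0 ^+ 2 by rewrite ler_sqr.
move=> h; rewrite !mulrDr; apply: lerD; last by rewrite mulrC.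
by apply: ler_wpM2r => //; apply: sqr_ge0.
Qed.

Definition resAt h (Vh : V h) mu := isinv (vec Vh - emb mu).

Lemma step23 h (Vh : V h) (sh : star h = h) (s t0 t1 : R) : 0 < t0 ->
  2 / 3 * t0 <= t1 -> t1 <= t0 ->
  resAt Vh (s +i* t0)%C -> resAt Vh (s +i* t1)%C.
Proof.
move=> t0p l1 l2 [R0 H].
have t1p : 0 < t1.
  apply: lt_le_trans l1; rewrite mulr_gt0 // divr_gt0 ?ltr0n //.
have ne0 : forall t : R, 0 < t -> (s +i* t)%C != 0.
  by move=> t tp; rewrite eq_complex /= negb_and (gt_eqF tp) orbT.
have hB := resB sh (lt0r_neq0 t0p) H.
rewrite gtr0_norm // in hB.
apply: (resStep (K := t0^-1) (ne0 _ t0p) (ne0 _ t1p) H).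
  by rewrite -(ler_pM2r t0p) mulVf ?lt0r_neq0.
have -> : (s +i* t1)%C - (s +i* t0)%C = (0 +i* (t1 - t0))%C.
  by apply/eqP; rewrite eq_complex /= subrr !eqxx.
have hc := normc_cmp s (ltW t1p) l2.
have hd : Normc.normc (0 +i* (t1 - t0))%C = t0 - t1.
  by rewrite /= expr0n /= add0r sqrtr_sqr ler0_norm ?subr_le0 // opprB.
rewrite hd.
set M0 := Normc.normc _ in hc *; set M := Normc.normc (s +i* t1)%C in hc *.
have M0p : 0 <= M0 by apply: normc_ge0.
have hd2 : t0 - t1 <= t1 / 2.
  lra.
rewrite -mulrA; apply: (le_trans (ler_wpM2r _ hd2)).
  by rewrite mulr_ge0 // invr_ge0 ltW.
have e : t1 / 2 * (M0 / t0) = (t1 * M0 / t0) / 2.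
  by field; rewrite lt0r_neq0.
rewrite e ler_pM2r ?invr_gt0 ?ltr0n //.
by rewrite ler_pdivrMr // [M * _]mulrC.
Qed.

Lemma stepHalf h (Vh : V h) (sh : star h = h) (s t0 t1 : R) : 0 < t0 ->
  t0 / 2 <= t1 -> t1 <= t0 ->
  resAt Vh (s +i* t0)%C -> resAt Vh (s +i* t1)%C.
Proof.
move=> t0p l1 l2 H.
case: (lerP (2 / 3 * t0) t1) => c.
  exact: (@step23 h Vh sh s t0 t1 t0p c l2 H).
have tmp : 0 < 3 / 4 * t0 by rewrite mulr_gt0 // divr_gt0 ?ltr0n.
apply: (@step23 h Vh sh s (3/4*t0) t1 tmp); [lra | lra |].
by apply: (@step23 h Vh sh s t0 (3/4*t0) t0p); [lra | lra |].
Qed.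

Lemma resUp h (Vh : V h) (sh : star h = h) (s t : R) : 0 < t -> resAt Vh (s +i* t)%C.
Proof.
move=> tp.
set T := 2 * norm h + t + 1.
have Tp : 0 < T by rewrite /T; have := norm_ge0 h; lra.
have ne0 : forall t : R, 0 < t -> (s +i* t)%C != 0.
  by move=> t' tp'; rewrite eq_complex /= negb_and (gt_eqF tp') orbT.
have P : forall n, forall t', T * (2^-1) ^+ n <= t' -> resAt Vh (s +i* t')%C.
  elim=> [|n ih] t'.
    rewrite expr0 mulr1 => hT.
    have t'p : 0 < t' by apply: lt_le_trans hT.
    apply: resI; first exact: ne0.
    apply: le_trans (normc_Im s t'); rewrite gtr0_norm //.
    by apply: le_trans hT; rewrite /T; lra.
  move=> hT.
  have q0 : 0 < T * (2^-1) ^+ n by rewrite mulr_gt0 // exprn_gt0 // invr_gt0 ltr0n.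
  case: (lerP (T * (2^-1) ^+ n) t') => c; first exact: ih.
  apply: (@stepHalf h Vh sh s _ t' q0); [| exact: ltW | exact: ih].
  by move: hT; rewrite exprS mulrCA mulrC.
have [n hn] := exists_pow_small (divr_gt0 tp Tp).
apply: (P n); rewrite mulrC -ler_pdivlMr //; exact: ltW.
Qed.

Lemma resAll h (Vh : V h) (sh : star h = h) mu : (complex.Im mu) != 0 -> resAt Vh mu.
Proof.
case: mu => s t /= t0.
case: (ltrP 0 t) => tp; first exact: resUp.
have tn : 0 < - t by rewrite oppr_gt0 lt_neqAle t0 tp.
have [R0 H] := @resUp h Vh sh s _ tn.
exists (ustar R0).
have := congr1 ustar H; rewrite ustarM ustarD ustarN ustar_vec ustar_emb ustar1.
rewrite (vec_eq (VS Vh) Vh sh) /= opprK.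
by [].
Qed.

Lemma pos_sq h (Vh : V h) (sh : star h = h) : positive_part mul star V (mul h h).
Proof.
have Vhh := VM Vh Vh.
split => //; split; first by rewrite starM sh.
move=> l hl.
have l0 : l != 0 by apply: contra hl => /eqP ->.
set mu := sqrtc l.
have mu2 : mu ^+ 2 = l by apply: sqr_sqrtc.
have Imu : complex.Im mu != 0.
  apply/eqP => e; apply: (negP hl); rewrite -mu2.
  move: e; case: (mu) => x y /= ->.
  by rewrite complexr0 -rmorphXn ler0c sqr_ge0.
have Imu' : complex.Im (- mu) != 0 by move: Imu; case: (mu) => x y /=; rewrite oppr_eq0.
have [Y1 H1] := resAll Vh sh Imu; have [Y2 H2] := resAll Vh sh Imu'.
have E : (vec Vh - emb mu) * (vec Vh - emb (- mu)) = vec Vhh - emb l.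
  have -> : (vec Vh - emb mu) * (vec Vh - emb (- mu)) = vec Vh * vec Vh - emb mu * emb mu.
    by rewrite embN; ring.
  by rewrite vecvec -embM -expr2 mu2 (vec_eq (VM Vh Vh) Vhh).
have H : (vec Vhh - emb l) * (Y1 * Y2) = 1.
  by rewrite -E mulrACA H1 H2 mulr1.
have usY := inv_us l0 H.
have hua := congr1 ua H.
rewrite uaM ua1 uaD uaN ua_vec ua_emb oppr0 addr0 usD usN us_vec us_emb add0r usY in hua.
exists (ua (Y1 * Y2)); split; first exact: uP.
have e1 : mul (mul h h) (ua (Y1 * Y2)) - l *: ua (Y1 * Y2) - l^-1 *: mul h h = 0.
  by rewrite -hua !scaleNr.
split => //; by rewrite (amulC (uP _) Vhh).
Qed.

Local Notation AV := (Ann mul V).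
Local Notation D S := (AV (AV S)).
Local Notation P := (positive_part mul star V).
Local Notation F := (annihilators mul star V).
Definition starcl (S : set A) := forall x, S x -> S (star x).

Lemma dbl0 (x : A) : x + x = 0 -> x = 0.
Proof.
move=> h; have : (2 : R[i]) *: x = 0 by rewrite scaler_nat mulr2n.
move=> /(congr1 (fun y => (2 : R[i])^-1 *: y)); rewrite scalerA mulVf ?scale1r ?scaler0 //.
by rewrite pnatr_eq0.
Qed.

Lemma annE a s : V a -> V s -> (mul a s + mul s a = 0) <-> (mul a s = 0).
Proof.
move=> Va Vs; rewrite (amulC Vs Va); split; first exact: dbl0.
by move=> ->; rewrite addr0.
Qed.

Lemma PV : P `<=` V. Proof. by move=> p []. Qed.
Lemma Pstar p : P p -> star p = p. Proof. by move=> [_ []]. Qed.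
Lemma AV_sub S : AV S `<=` V. Proof. by move=> a []. Qed.
Lemma AV_anti S T : S `<=` T -> AV T `<=` AV S.
Proof. by move=> ST a [Va h]; split => // s /ST; apply: h. Qed.
Lemma AV_ext S : S `<=` V -> S `<=` D S.
Proof.
move=> SV s Ss; split; first exact: SV.
by move=> a [Va h]; rewrite addrC; apply: h.
Qed.
Lemma AV3 S : S `<=` V -> AV (D S) = AV S.
Proof.
move=> SV; apply: funext => a; apply: propext; split.
  by apply: AV_anti; apply: AV_ext.
by apply: AV_ext; apply: AV_sub.
Qed.
Lemma Dmono S T : S `<=` T -> D S `<=` D T.
Proof. by move=> ST; apply: AV_anti; apply: AV_anti. Qed.
Lemma AV0 S : AV S 0.
Proof. by split; [exact: V0 | move=> s _; rewrite amul0l amul0r addr0]. Qed.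
Lemma AV_star S : S `<=` V -> starcl S -> starcl (AV S).
Proof.
move=> SV Sst a [Va h]; split; first exact: VS.
move=> s Ss; have := h _ (Sst _ Ss); move/(congr1 star).
by rewrite starD !starM starK star0 addrC.
Qed.
Lemma AV_ideal S : S `<=` V -> forall v a, V v -> AV S a -> AV S (mul v a).
Proof.
move=> SV v a Vv [Va h]; split; first exact: VM.
move=> s Ss; have Vs := SV _ Ss.
rewrite -(amulA v a s) (amulA s v a) (amulC Vs Vv) -(amulA v s a) -amulDr h //.
exact: amul0r.
Qed.
Lemma AV_add S a b : AV S a -> AV S b -> AV S (a + b).
Proof.
move=> [Va ha] [Vb hb]; split; first exact: VD.
by move=> s Ss; rewrite amulDl amulDr addrACA ha // hb // addr0.
Qed.
Lemma AV_scale S c a : AV S a -> AV S (c *: a).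
Proof.
move=> [Va ha]; split; first exact: VZ.
by move=> s Ss; rewrite amulZl amulZr -scalerDr ha // scaler0.
Qed.

Lemma vec_inj x y (hx : V x) (hy : V y) : vec hx = vec hy -> x = y.
Proof. by move=> e; have := congr1 ua e. Qed.

Lemma Klem X : X `<=` V -> starcl X -> forall z, X z ->
  (forall x, X x -> mul z x + mul x z = 0) -> z = 0.
Proof.
move=> XV Xst z Xz h; apply: normC0.
have := h _ (Xst _ Xz); rewrite (amulC (XV _ Xz) (VS (XV _ Xz))).
exact: dbl0.
Qed.

Definition good (J : set A) := [/\ J `<=` V, starcl J,
  (forall x y, J x -> J y -> J (x + y)), (forall c x, J x -> J (c *: x)) &
  (forall v x, V v -> J x -> J (mul v x))].

Definition half : R[i] := ((2 : R)^-1 +i* 0)%C.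
Definition c2 : R[i] := (0 +i* (- (2 : R)^-1))%C.
Lemma conj_half : (half^*)%C = half.
Proof. by apply/eqP; rewrite eq_complex /= oppr0 !eqxx. Qed.
Lemma conj_c2 : (c2^*)%C = - c2.
Proof. by apply/eqP; rewrite eq_complex /= oppr0 !eqxx. Qed.
Lemma i_c2 : ('i : R[i]) * c2 = half.
Proof. by apply/eqP; rewrite eq_complex /=; apply/andP; split; apply/eqP; ring. Qed.
Lemma half2 : half + half = 1.
Proof. by apply/eqP; rewrite eq_complex /=; apply/andP; split; apply/eqP; field. Qed.

Lemma Qlem J a : good J -> V a -> (forall p, P p -> J p -> mul a p + mul p a = 0) ->
  forall z, J z -> mul a z + mul z a = 0.
Proof.
move=> [JV Jst Jadd Jsc Jid] Va hP.
have sa : forall k, J k -> star k = k -> mul a k = 0.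
  move=> k Jk sk; have Vk := JV _ Jk.
  have Pkk := pos_sq Vk sk.
  have Jkk : J (mul k k) by apply: (Jid).
  have e0 : mul a (mul k k) = 0.
    by apply/(annE Va (VM Vk Vk)); apply: hP.
  apply: normC0; rewrite starM sk.
  have Vsa := VS Va.
  rewrite (amulC Vk Vsa) -(amulA (star a) k (mul a k)) (amulA k a k) (amulC Vk Va).
  by rewrite -(amulA a k k) e0 amul0r.
move=> z Jz; have Vz := JV _ Jz.
apply/(annE Va Vz).
set h1 := half *: (z + star z).
set h2 := c2 *: (z - star z).
have Jh1 : J h1 by apply: (Jsc); apply: (Jadd) => //; apply: (Jst).
have Jh2 : J h2.
  by apply: (Jsc); apply: (Jadd) => //; rewrite -scaleN1r; apply: (Jsc); apply: (Jst).
have s1 : star h1 = h1 by rewrite /h1 starZ conj_half starD starK addrC.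
have s2 : star h2 = h2.
  by rewrite /h2 starZ conj_c2 starD starN starK scaleNr -scalerN opprD opprK addrC.
have ez : z = h1 + 'i *: h2.
  rewrite /h2 scalerA i_c2 /h1 -scalerDr addrACA subrr addr0.
  by rewrite scalerDr -scalerDl half2 scale1r.
by rewrite ez amulDr (sa _ Jh1 s1) amulZr (sa _ Jh2 s2) scaler0 addr0.
Qed.

Lemma good_AV S : S `<=` V -> starcl S -> good (AV S).
Proof.
move=> SV Sst; split; [exact: AV_sub | exact: AV_star | exact: AV_add |
  exact: AV_scale | exact: AV_ideal].
Qed.

Lemma seteq (X Y : set A) : X `<=` Y -> Y `<=` X -> X = Y.
Proof. by move=> h1 h2; apply: funext => z; apply: propext; split; [apply: h1|apply: h2]. Qed.

Lemma AV_P_eq J : good J -> AV (P `&` J) = AV J.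
Proof.
move=> gJ; apply: seteq; last by apply: AV_anti => z [].
move=> a [Va ha]; split => // z Jz.
by apply: (Qlem gJ Va) => // p Pp Jp; apply: ha.
Qed.

Lemma FD T : T `<=` V -> starcl T -> F (D T).
Proof.
move=> TV Tst; exists (P `&` D T); split; first by move=> z [].
rewrite AV_P_eq ?AV3 //.
  exact: AV_sub.
by apply: good_AV; [exact: AV_sub | apply: AV_star].
Qed.

Lemma F_inv X : F X -> exists S, [/\ S `<=` V, starcl S & X = AV S].
Proof.
move=> [S0 [S0P ->]]; exists (AV S0); split => //; first exact: AV_sub.
apply: AV_star; first by move=> z /S0P /PV.
by move=> z Sz; rewrite (Pstar (S0P _ Sz)).
Qed.

Lemma F_props X : F X -> [/\ X `<=` V, starcl X, good X & D X = X].
Proof.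
move=> /F_inv [S [SV Sst ->]]; split; [exact: AV_sub | exact: AV_star |
  exact: good_AV | exact: AV3].
Qed.

Lemma AV_U S T : AV (S `|` T) = AV S `&` AV T.
Proof.
apply: seteq.
  by move=> a h; split; apply: (AV_anti _ h) => z hz; [left|right].
by move=> a [[Va h1] [_ h2]]; split => // z [] ?; [apply: h1|apply: h2].
Qed.

Lemma meet_F X Y : F X -> F Y -> F (X `&` Y).
Proof.
move=> /F_inv [S1 [S1V S1st ->]] /F_inv [S2 [S2V S2st ->]].
rewrite -AV_U -AV3; last by move=> z [] ?; [apply: S1V|apply: S2V].
apply: FD; first exact: AV_sub.
apply: AV_star; first by move=> z [] ?; [apply: S1V|apply: S2V].
by move=> z [] ?; [left; apply: S1st|right; apply: S2st].
Qed.

Lemma meet_ex X Y : F X -> F Y -> is_meet F X Y (X `&` Y).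
Proof.
move=> FX FY; split; first exact: meet_F.
split; first by move=> z [].
split; first by move=> z [].
by move=> K _ h1 h2 z Kz; split; [apply: h1|apply: h2].
Qed.

Lemma meet_uniq X Y M : F X -> F Y -> is_meet F X Y M -> M = X `&` Y.
Proof.
move=> FX FY [FM [h1 [h2 h3]]]; apply: seteq.
  by move=> z Mz; split; [apply: h1|apply: h2].
by apply: h3; [exact: meet_F | move=> z [] | move=> z []].
Qed.

Lemma join_ex X Y : F X -> F Y -> is_join F X Y (D (X `|` Y)).
Proof.
move=> FX FY; have [XV Xst _ _] := F_props FX; have [YV Yst _ _] := F_props FY.
have UV : X `|` Y `<=` V by move=> z [] ?; [apply: XV|apply: YV].
split.
  apply: FD => // z [] ?; [left; apply: Xst|right; apply: Yst] => //.
split; first by move=> z Xz; apply: AV_ext => //; left.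
split; first by move=> z Yz; apply: AV_ext => //; right.
move=> K FK h1 h2; have [_ _ _ DK] := F_props FK.
rewrite -DK; apply: Dmono => z [] ?; [apply: h1|apply: h2] => //.
Qed.

Lemma join_uniq X Y J : F X -> F Y -> is_join F X Y J -> J = D (X `|` Y).
Proof.
move=> FX FY [FJ [h1 [h2 h3]]]; have [FD' [g1 [g2 g3]]] := join_ex FX FY.
by apply: seteq; [apply: h3 | apply: g3].
Qed.

Lemma distr X Y Z : F X -> F Y -> F Z ->
  X `&` D (Y `|` Z) = D ((X `&` Y) `|` (X `&` Z)).
Proof.
move=> FX FY FZ.
have [XV Xst gX DX] := F_props FX.
have [YV Yst gY DY] := F_props FY.
have [ZV Zst gZ DZ] := F_props FZ.
have FJ : F (D (Y `|` Z)) by have [] := join_ex FY FZ.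
have Fm := meet_F FX FJ.
have [mV _ _ Dm] := F_props Fm.
have UV : Y `|` Z `<=` V by move=> z [] ?; [apply: YV|apply: ZV].
apply: seteq; last first.
  rewrite -[X in _ `<=` X]Dm; apply: Dmono.
  move=> z [] [Xz hz]; split => //; apply: AV_ext => //; by [left|right].
move=> a [Xa Ja]; have Va := XV _ Xa.
split => // b [Vb hb].
have ideal_good : forall J, good J -> forall v x, V v -> J x -> J (mul v x).
  by move=> J [].
have Ve := VM Vb Va.
suff : mul b a = 0.
  by move=> e; apply/(annE Va Vb); rewrite (amulC Va Vb).
have UVst : starcl (Y `|` Z).
  by move=> z [] h; [left; apply: Yst | right; apply: Zst].
have Jst : starcl (D (Y `|` Z)) by apply: AV_star; [exact: AV_sub | exact: AV_star].
apply: (Klem (X := D (Y `|` Z))) => //.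
- exact: AV_sub.
- by apply: AV_ideal => //; exact: AV_sub.
- move=> x Jx.
  suff : AV (Y `|` Z) (mul b a).
    by rewrite -AV3 // => -[_]; apply.
  split => // y Uy; have Vy := UV _ Uy.
  apply/(annE Ve Vy); rewrite -amulA.
  have Vay := VM Va Vy.
  have Wy : (X `&` Y `|` X `&` Z) (mul a y).
    rewrite (amulC Va Vy).
    case: Uy => [Yy|Zy]; [left|right]; split.
    - exact: (ideal_good _ gX).
    - by rewrite (amulC Vy Va); apply: (ideal_good _ gY).
    - exact: (ideal_good _ gX).
    - by rewrite (amulC Vy Va); apply: (ideal_good _ gZ).
  by apply/(annE Vb Vay); apply: hb.
Qed.

Lemma lattF : is_lattice F.
Proof. by move=> X Y FX FY; split; [exists (D (X `|` Y)); apply: join_ex | exists (X `&` Y); apply: meet_ex]. Qed.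

Lemma distrF : distributive_lattice F.
Proof.
split; first exact: lattF.
move=> X Y Z FX FY FZ j m a b d hj hm ha hb hd.
have FJ : F j by case: hj.
have Fa : F a by case: ha.
have Fb : F b by case: hb.
rewrite (meet_uniq FX FJ hm) (join_uniq Fa Fb hd) (join_uniq FY FZ hj).
rewrite (meet_uniq FX FY ha) (meet_uniq FX FZ hb).
exact: distr.
Qed.

Lemma modF : modular_lattice F.
Proof.
split; first exact: lattF.
move=> X Y Z FX FY FZ XZ m j1 j2 m2 hm hj1 hj2 hm2.
have Fm : F m by case: hm.
have Fj2 : F j2 by case: hj2.
rewrite (join_uniq FX Fm hj1) (meet_uniq Fj2 FZ hm2) (join_uniq FX FY hj2).
rewrite (meet_uniq FY FZ hm) [in RHS]setIC distr // (setIidr XZ) [Z `&` Y]setIC.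
by [].
Qed.

Lemma goodV : good V.
Proof. by split; [by [] | exact: VS | exact: VD | exact: VZ | exact: VM]. Qed.

Lemma AVV z : AV V z <-> z = 0.
Proof.
split; last by move=> ->; apply: AV0.
move=> [Vz h]; apply: (Klem (X := V)) => //; exact: VS.
Qed.

Lemma boolF : boolean_algebra F.
Proof.
split; first exact: distrF.
have bot0 : forall z, D set0 z <-> z = 0.
  move=> z; have -> : AV set0 = V.
    by apply: seteq; [exact: AV_sub | move=> x Vx; split].
  exact: AVV.
have top0 : forall z, AV P z <-> z = 0.
  move=> z; have -> : AV P = AV V.
    rewrite -(AV_P_eq goodV); congr AV; apply: seteq; first by move=> x Px; split => //; apply: PV.
    by move=> x [].
  exact: AVV.
exists (D set0), (D P); split; first by exists set0; split => // z.
split; first by exists P; split.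
split.
  move=> X [S [SP ->]]; split; apply: Dmono => //.
move=> X FX; have [XV Xst gX DX] := F_props FX.
have X0 : X 0 by have [S [_ _ ->]] := F_inv FX; apply: AV0.
have FY : F (AV X).
  have <- : D (AV X) = AV X by rewrite AV3.
  by apply: FD; [exact: AV_sub | exact: AV_star].
exists (AV X); split => //; split.
  have -> : D set0 = X `&` AV X.
    apply: seteq.
      by move=> z /bot0 ->; split => //; apply: AV0.
    move=> z [Xz [Vz hz]]; apply/bot0; apply: (Klem (X := X)) => // x Xx.
  exact: meet_ex.
have -> : D P = D (X `|` AV X).
  congr AV; apply: seteq => z.
    by move/top0 => ->; apply: AV0.
  rewrite AV_U => -[[Vz hz] h2]; apply/top0.
  have Xz : X z by rewrite -DX.
  apply: (Klem (X := X)) => // x Xx; by rewrite addrC; apply: hz.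
exact: join_ex.
Qed.

End S.

Unset Implicit Arguments.

Theorem lemma14 (R : realType) (A : lmodType R[i])
  (mul : A -> A -> A) (star : A -> A) (norm : A -> R)
  (hA : cstar_axioms mul star norm)
  (V : set A)
  (hVann : annihilators mul star setT V)
  (hVab : abelian mul star norm V) :
  boolean_algebra (annihilators mul star V) /\
  (forall W : set A, annihilators mul star setT W -> abelian mul star norm W ->
     modular_lattice (annihilators mul star W)).
Proof.
split; first exact: (boolF hA hVab).
by move=> W _ hW; exact: (modF hA hW).
Qed.
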